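(* Let $G$ be a simple connected graph on $n$ vertices with clique number $\omega$, $2\le\omega\le n-1$, and Wiener index $W$. Let $G_1,\dots,G_k$ be all the cliques of order $\omega$, $s_i=\sum_{v_j\in V(G_i)}D_j$, $a_i=n\omega(1-\omega)+4\omega(s_i-W)-ns_i$ and $b_i=4W\omega(\omega-1)+4s_i(W-s_i)$ for $1\le i\le k$. Then (i) $\displaystyle q^{\mathcal{D}}(G)\ge \max_{1\le i\le k}\frac{-a_i+\sqrt{a_i^{2}-4b_i(n-\omega)\omega}}{2(n-\omega)\omega}$; (ii) $\displaystyle q^{\mathcal{D}}_{min}(G)\le \min_{1\le i\le k}\frac{-a_i-\sqrt{a_i^{2}-4b_i(n-\omega)\omega}}{2(n-\omega)\omega}$.
   Context: $G$ has vertex set $\{v_1,\dots,v_n\}$; $d_G$ is the graph distance; $\mathcal{D}(G)=(d_G(v_i,v_j))$. $D_j=\sum_{l\ne j}d_G(v_j,v_l)$, $Tr(G)=\mathrm{diag}(D_1,\dots,D_n)$, $\mathcal{Q}(G)=Tr(G)+\mathcal{D}(G)$. $W=\sum_{i<j}d_G(v_i,v_j)$. The clique number is the largest order of a complete subgraph. $q^{\mathcal{D}}(G)$, $q^{\mathcal{D}}_{min}(G)$ are the largest and least eigenvalues of $\mathcal{Q}(G)$. *)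

(* Defs.v *)
From HB Require Import structures.
From mathcomp Require Import all_boot all_order all_algebra.
From mathcomp.real_closed Require Import polyrcf.
Set Implicit Arguments. Unset Strict Implicit. Unset Printing Implicit Defensive.
Import Order.TTheory GRing.Theory Num.Theory.
Local Open Scope ring_scope.

Section Graphs.
Variable n : nat.
Variable e : rel 'I_n.

Definition simple_graph : Prop := symmetric e /\ irreflexive e.

Definition connected_graph : Prop := forall i j : 'I_n, connect e i j.

Definition walk_of_length (k : nat) (i j : 'I_n) : bool :=
  [exists p : k.-tuple 'I_n, path e i p && (last i p == j)].

(* graph distance: the least length of a walk from i to j
   (in a connected graph on n vertices this is < n) *)
Definition gdist (i j : 'I_n) : nat :=
  find (fun k => walk_of_length k i j) (iota 0 n).

Definition is_clique (A : {set 'I_n}) : bool :=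
  [forall x in A, forall y in A, (x != y) ==> e x y].

Definition clique_number : nat :=
  \max_(A : {set 'I_n} | is_clique A) #|A|.

Definition max_order_clique (A : {set 'I_n}) : bool :=
  is_clique A && (#|A| == clique_number).

Variable R : rcfType.

Definition transmission (j : 'I_n) : R :=
  \sum_(l < n | l != j) (gdist j l)%:R.

Definition wiener : R := \sum_(i < n) \sum_(j < n | (i < j)%N) (gdist i j)%:R.

Definition dist_mx : 'M[R]_n := \matrix_(i, j) (gdist i j)%:R.
Definition trans_mx : 'M[R]_n := diag_mx (\row_j transmission j).
Definition signless_dist_lap : 'M[R]_n := trans_mx + dist_mx.

(* spectrum = real roots of the characteristic polynomial (sorted increasingly) *)
Definition Q_spectrum : seq R := rootsR (char_poly signless_dist_lap).

Definition qD_max : R := \big[Num.max/head 0 Q_spectrum]_(x <- Q_spectrum) x.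
Definition qD_min : R := \big[Num.min/head 0 Q_spectrum]_(x <- Q_spectrum) x.

Definition s_of (A : {set 'I_n}) : R := \sum_(j in A) transmission j.

Definition a_of (A : {set 'I_n}) : R :=
  let w := (clique_number)%:R in let s := s_of A in
  n%:R * w * (1 - w) + 4 * w * (s - wiener) - n%:R * s.

Definition b_of (A : {set 'I_n}) : R :=
  let w := (clique_number)%:R in let s := s_of A in
  4 * wiener * w * (w - 1) + 4 * s * (wiener - s).

End Graphs.

(* Main.v *)
Require Import Defs.
From HB Require Import structures.
From mathcomp Require Import all_boot all_order all_algebra.
From mathcomp.real_closed Require Import polyrcf complex.
From mathcomp Require Import zify ring lra.
Import Order.TTheory GRing.Theory Num.Theory.
Local Open Scope ring_scope.

Lemma in_rootsR (R : rcfType) (p : {poly R}) x : p != 0 -> root p x -> x \in rootsR p.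
Proof.
move=> p0 rx; exact: (root_roots_on (roots_on_rootsR p0)).
Qed.

Section Spec.
Context {R : rcfType}.
Local Notation C := (R[i]).
Local Notation f := (real_complex R).

Lemma spec_decomp n (Q : 'M[R]_n) (u : 'I_n -> R) : Q^T = Q ->
 exists r c : 'I_n -> R, (forall k, root (char_poly Q) (r k)) /\ (forall k, 0 <= c k) /\
  \sum_i u i ^+ 2 = \sum_k c k /\ \sum_i \sum_j u i * Q i j * u j = \sum_k r k * c k.
Proof.
move=> Qsym.
pose QC : 'M[C]_n := map_mx f Q.
have herm : QC \is hermsymmx.
  rewrite is_hermitianmxE expr0 scale1r; apply/eqP/matrixP => i j.
  rewrite !mxE.
  have /matrixP/(_ j i) := Qsym; rewrite mxE => ->.
  by rewrite conj_Creal // complex_real.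
pose P := spectralmx QC; pose D := spectral_diag QC.
have QCE : QC = invmx P *m diag_mx D *m P.
  exact/orthomx_spectralP/hermitian_normalmx.
have Pu : P \is unitarymx := spectral_unitarymx QC.
have Punit : P \in unitmx := spectral_unit QC.
have Dreal : D \is a realmx := hermitian_spectral_diag_real herm.
pose Ps := map_mx Num.conj P^T.
have PsE : invmx P = Ps by rewrite invmx_unitary.
have PsP : Ps *m P = 1%:M by rewrite -PsE mulVmx.
pose xC : 'rV[C]_n := \row_i f (u i).
pose y := xC *m Ps.
pose z := P *m xC^T.
have zE k : z k 0 = (y 0 k)^*.
  rewrite !mxE rmorph_sum; apply: eq_bigr => j _.
  rewrite /xC /Ps !mxE rmorphM /=.
  have -> : ((P k j)^*)^* = P k j by exact: conjCK.
  by rewrite conj_Creal ?complex_real // mulrC.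
have Dr k : D 0 k = (complex.Re (D 0 k))%:C%C.
  by rewrite RRe_real //; move/mxOverP: Dreal; apply.
have yr k : y 0 k * (y 0 k)^* = (complex.Re (y 0 k * (y 0 k)^*))%:C%C.
  by rewrite RRe_real // ger0_real // mul_conjC_ge0.
exists (fun k => complex.Re (D 0 k)), (fun k => complex.Re (y 0 k * (y 0 k)^*)).
split.
  move=> k; rewrite -(fmorph_root f) map_char_poly.
  suff H : root (char_poly QC) (D 0 k) by move: H; rewrite {1}Dr; apply.
  rewrite -eigenvalue_root_char.
  apply/eigenvalueP; exists (row k P).
    have : P *m QC = diag_mx D *m P by rewrite QCE !mulmxA mulmxV // mul1mx.
    by move/(congr1 (row k)); rewrite -row_mul => ->; rewrite mul_diag_mx; apply/rowP => j; rewrite !mxE.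
  apply/eqP => /(congr1 (fun v => v *m invmx P)).
  rewrite -row_mul mulmxV // mul0mx row1 => /matrixP/(_ 0 k).
  by rewrite !mxE !eqxx /= => /eqP; rewrite oner_eq0.
split.
  by move=> k; rewrite -ler0c -yr mul_conjC_ge0.
have yz : xC *m (Ps *m P) *m xC^T = y *m z by rewrite /y /z !mulmxA.
have yDz : xC *m QC *m xC^T = y *m diag_mx D *m z by rewrite QCE PsE /y /z !mulmxA.
split.
  apply: complexI; rewrite !rmorph_sum /=.
  have -> : \sum_i f (u i ^+ 2) = (xC *m xC^T) 0 0.
    by rewrite mxE; apply: eq_bigr => i _; rewrite !mxE rmorphXn expr2.
  have -> : xC *m xC^T = xC *m (Ps *m P) *m xC^T by rewrite PsP mulmx1.
  rewrite yz mxE.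
  by apply: eq_bigr => k _; rewrite zE -yr.
apply: complexI; rewrite !rmorph_sum /=.
have -> : \sum_i f (\sum_j u i * Q i j * u j) = (xC *m QC *m xC^T) 0 0.
  rewrite mxE; under [in RHS]eq_bigr do rewrite mxE mulr_suml.
  rewrite [in RHS]exchange_big /=; apply: eq_bigr => i _.
  rewrite rmorph_sum; apply: eq_bigr => j _.
  by rewrite !mxE !rmorphM.
rewrite yDz mxE; apply: eq_bigr => k _.
rewrite zE mul_mx_diag mxE rmorphM {1}Dr mulrAC yr mulrC.
reflexivity.
Qed.
End Spec.
Section Alg.
Context {R : rcfType}.

Lemma psd2 (p q r : R) : (forall al be : R, 0 <= al^+2 * p - 2 * al * be * q + be^+2 * r) ->
  [/\ 0 <= p, 0 <= r & q^+2 <= p * r].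
Proof.
move=> H.
have p0 : 0 <= p.
  have := H 1 0; have -> : 1 ^+ 2 * p - 2 * 1 * 0 * q + 0 ^+ 2 * r = p by ring. done.
have r0 : 0 <= r.
  have := H 0 1; have -> : 0 ^+ 2 * p - 2 * 0 * 1 * q + 1 ^+ 2 * r = r by ring. done.
split => //.
have [rp|] := ltrP 0 r.
  have := H r q.
  have -> : r ^+ 2 * p - 2 * r * q * q + q ^+ 2 * r = r * (p * r - q^+2) by ring.
  by rewrite pmulr_rge0 // subr_ge0.
move=> rle; have r00 : r = 0 by apply/eqP; rewrite eq_le rle r0.
subst r; rewrite mulr0.
have [q0|qn0] := eqVneq q 0; first by rewrite q0 expr0n.
have := H 1 ((p + 1) / (2 * q)).
have -> : 1 ^+ 2 * p - 2 * 1 * ((p + 1) / (2 * q)) * q + ((p + 1) / (2 * q)) ^+ 2 * 0 = -1.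
  by field.
by rewrite oppr_ge0 ler10.
Qed.

Lemma quad_max (c1 c2 S11 S12 S22 lam : R) : 0 < c1 -> 0 < c2 ->
 (forall al be : R, al^+2 * S11 + 2*al*be*S12 + be^+2*S22 <= lam * (al^+2*c1 + be^+2*c2)) ->
 (- (-(c2*S11 + c1*S22)) + Num.sqrt ((-(c2*S11 + c1*S22))^+2 - 4*(S11*S22 - S12^+2)*c2*c1))
   / (2*c2*c1) <= lam.
Proof.
move=> c1p c2p H.
have [P11 P22 D] : [/\ 0 <= lam * c1 - S11, 0 <= lam * c2 - S22 & S12^+2 <= (lam*c1 - S11) * (lam*c2 - S22)].
  apply: psd2 => al be; have := H al be; rewrite -subr_ge0.
  suff -> : lam * (al ^+ 2 * c1 + be ^+ 2 * c2) - (al ^+ 2 * S11 + 2 * al * be * S12 + be ^+ 2 * S22)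
     = al ^+ 2 * (lam * c1 - S11) - 2 * al * be * S12 + be ^+ 2 * (lam * c2 - S22) by [].
  by ring.
set a := -(c2*S11 + c1*S22); set disc := _ - _.
set t := 2 * c2 * c1 * lam + a.
have t0 : 0 <= t.
  have -> : t = c2 * (lam * c1 - S11) + c1 * (lam * c2 - S22) by rewrite /t /a; ring.
  by rewrite addr_ge0 // mulr_ge0 // ltW.
have dt : disc <= t^+2.
  rewrite -subr_ge0.
  have -> : t^+2 - disc = 4 * c1 * c2 * ((lam*c1 - S11) * (lam*c2 - S22) - S12^+2).
    by rewrite /t /disc /a; ring.
  by apply: mulr_ge0; [rewrite !mulr_ge0 ?ltW | rewrite subr_ge0].
have sq : Num.sqrt disc <= t.
  by rewrite -(ger0_norm t0) -sqrtr_sqr ler_wsqrtr.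
rewrite ler_pdivrMr; last by rewrite !mulr_gt0.
rewrite /t in sq; lra.
Qed.

Lemma quad_min (c1 c2 S11 S12 S22 lam : R) : 0 < c1 -> 0 < c2 ->
 (forall al be : R, lam * (al^+2*c1 + be^+2*c2) <= al^+2 * S11 + 2*al*be*S12 + be^+2*S22) ->
 lam <= (- (-(c2*S11 + c1*S22)) - Num.sqrt ((-(c2*S11 + c1*S22))^+2 - 4*(S11*S22 - S12^+2)*c2*c1))
   / (2*c2*c1).
Proof.
move=> c1p c2p H.
have [P11 P22 D] : [/\ 0 <= S11 - lam * c1, 0 <= S22 - lam * c2 & (-S12)^+2 <= (S11 - lam*c1) * (S22 - lam*c2)].
  apply: psd2 => al be; have := H al be; rewrite -subr_ge0.
  suff -> : (al ^+ 2 * S11 + 2 * al * be * S12 + be ^+ 2 * S22) - lam * (al ^+ 2 * c1 + be ^+ 2 * c2)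
     = al ^+ 2 * (S11 - lam * c1) - 2 * al * be * (- S12) + be ^+ 2 * (S22 - lam * c2) by [].
  by ring.
set a := -(c2*S11 + c1*S22); set disc := a ^+ 2 - _.
set t := - (2 * c2 * c1 * lam + a).
have t0 : 0 <= t.
  have -> : t = c2 * (S11 - lam * c1) + c1 * (S22 - lam * c2) by rewrite /t /a; ring.
  by rewrite addr_ge0 // mulr_ge0 // ltW.
have dt : disc <= t^+2.
  rewrite -subr_ge0.
  have -> : t^+2 - disc = 4 * c1 * c2 * ((S11 - lam*c1) * (S22 - lam*c2) - (-S12)^+2).
    by rewrite /t /disc /a; ring.
  by apply: mulr_ge0; [rewrite !mulr_ge0 ?ltW | rewrite subr_ge0].
have sq : Num.sqrt disc <= t.
  by rewrite -(ger0_norm t0) -sqrtr_sqr ler_wsqrtr.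
rewrite ler_pdivlMr; last by rewrite !mulr_gt0.
rewrite /t in sq; lra.
Qed.

End Alg.
Section G.
Variable n : nat.
Variable e : rel 'I_n.
Hypothesis esym : symmetric e.

Lemma walk_sym k i j : walk_of_length e k i j -> walk_of_length e k j i.
Proof.
case/existsP => p /andP [pp /eqP lp].
apply/existsP.
have sz : size (rev (belast i p)) == k by rewrite size_rev size_belast size_tuple.
exists (Tuple sz) => /=; apply/andP; split.
  rewrite -lp rev_path; move: pp; apply: sub_path => x y; by rewrite esym.
case: (tval p) lp => [|x s] /= lp; first by rewrite lp.
by rewrite rev_cons last_rcons.
Qed.

Lemma gdist_sym i j : gdist e i j = gdist e j i.
Proof.
rewrite /gdist; apply: eq_find => k /=.
by apply/idP/idP => /walk_sym.
Qed.

Lemma walk0 i : walk_of_length e 0 i i.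
Proof. by apply/existsP; exists [tuple] => /=. Qed.

Lemma gdist_refl i : gdist e i i = 0%N.
Proof.
have n0 : (0 < n)%N by apply: leq_ltn_trans (ltn_ord i).
rewrite /gdist; have -> : iota 0 n = 0%N :: iota 1 n.-1 by case: (n) n0.
by rewrite /= walk0.
Qed.

Lemma gdist_adj i j : i != j -> e i j -> gdist e i j = 1%N.
Proof.
move=> nij eij; rewrite /gdist.
have n1 : (1 < n)%N.
  apply: contraNT nij; rewrite -leqNgt => h; apply/eqP/val_inj => /=.
  have := ltn_ord i; have := ltn_ord j; lia.
have -> : iota 0 n = 0%N :: 1%N :: iota 2 n.-2 by case: (n) n1 => [|[|]].
have w0 : ~~ walk_of_length e 0 i j.
  by apply/existsPn => p; rewrite tuple0 /=.
have w1 : walk_of_length e 1 i j.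
  by apply/existsP; exists [tuple j]; rewrite /= eij eqxx.
by rewrite /= (negbTE w0) w1.
Qed.

End G.
Section Main.
Context {R : rcfType}.

Lemma ray_max n (Q : 'M[R]_n) M (u : 'I_n -> R) : Q^T = Q ->
  (forall r, root (char_poly Q) r -> r <= M) ->
  \sum_i \sum_j u i * Q i j * u j <= M * \sum_i u i ^+ 2.
Proof.
move=> Qs HM; have [r [c [Hr [Hc [E1 E2]]]]] := @spec_decomp R _ Q u Qs.
rewrite E1 E2 mulr_sumr; apply: ler_sum => k _.
by apply: ler_wpM2r => //; apply: HM.
Qed.

Lemma ray_min n (Q : 'M[R]_n) M (u : 'I_n -> R) : Q^T = Q ->
  (forall r, root (char_poly Q) r -> M <= r) ->
  M * \sum_i u i ^+ 2 <= \sum_i \sum_j u i * Q i j * u j.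
Proof.
move=> Qs HM; have [r [c [Hr [Hc [E1 E2]]]]] := @spec_decomp R _ Q u Qs.
rewrite E1 E2 mulr_sumr; apply: ler_sum => k _.
by apply: ler_wpM2r => //; apply: HM.
Qed.

Lemma le_bigmax_seq (s : seq R) idx x : x \in s -> x <= \big[Num.max/idx]_(y <- s) y.
Proof.
elim: s => // y s IH; rewrite in_cons big_cons => /orP [/eqP ->|xs].
  by rewrite le_max lexx.
by rewrite le_max IH ?orbT.
Qed.

Lemma ge_bigmin_seq (s : seq R) idx x : x \in s -> \big[Num.min/idx]_(y <- s) y <= x.
Proof.
elim: s => // y s IH; rewrite in_cons big_cons => /orP [/eqP ->|xs].
  by rewrite ge_min lexx.
by rewrite ge_min IH ?orbT.
Qed.

Lemma split_quad n (A : {set 'I_n}) (F : 'I_n -> 'I_n -> R) al be :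
  let u i := if i \in A then al else be in
  \sum_i \sum_j u i * F i j * u j =
  al^+2 * (\sum_(i in A) \sum_(j in A) F i j)
  + al * be * (\sum_(i in A) \sum_(j | j \notin A) F i j + \sum_(i | i \notin A) \sum_(j in A) F i j)
  + be^+2 * (\sum_(i | i \notin A) \sum_(j | j \notin A) F i j).
Proof.
move=> u.
have H1 i : i \in A -> \sum_j u i * F i j * u j =
   al^+2 * \sum_(j in A) F i j + al * be * \sum_(j | j \notin A) F i j.
  move=> iA; rewrite (bigID (mem A)) /= !mulr_sumr; congr (_ + _).
    by apply: eq_bigr => j jA; rewrite /u iA jA; ring.
  by apply: eq_bigr => j jA; rewrite /u iA (negbTE jA); ring.
have H2 i : i \notin A -> \sum_j u i * F i j * u j =
   al * be * \sum_(j in A) F i j + be^+2 * \sum_(j | j \notin A) F i j.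
  move=> iA; rewrite (bigID (mem A)) /= !mulr_sumr; congr (_ + _).
    by apply: eq_bigr => j jA; rewrite /u (negbTE iA) jA; ring.
  by apply: eq_bigr => j jA; rewrite /u (negbTE iA) (negbTE jA); ring.
rewrite (bigID (mem A)) /= (eq_bigr _ H1) (eq_bigr _ H2) !big_split /= -!mulr_sumr.
ring.
Qed.

End Main.

Section Main2.
Context {R : rcfType} {n : nat} (e : rel 'I_n) (esym : symmetric e).
Local Notation Q := (signless_dist_lap e R).
Local Notation d i j := ((gdist e i j)%:R : R).
Local Notation Dt := (transmission e R).
Local Notation W := (wiener e R).

Lemma QE i j : Q i j = (i == j)%:R * Dt i + d i j.
Proof. by rewrite /signless_dist_lap !mxE mulr_natl. Qed.

Lemma dsym i j : d i j = d j i.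
Proof. by rewrite (@gdist_sym n e esym). Qed.

Lemma drefl i : d i i = 0.
Proof. by rewrite (@gdist_refl n e). Qed.

Lemma Qsym : Q^T = Q.
Proof.
apply/matrixP => i j; rewrite mxE !QE dsym.
case: (eqVneq i j) => [->//|nij].
by rewrite !mul0r.
Qed.

Lemma DtE i : Dt i = \sum_j d i j.
Proof. by rewrite /transmission [RHS](bigD1 i) //= drefl add0r. Qed.

Lemma WE : \sum_i Dt i = 2 * W.
Proof.
have sp i j : d i j = (if (i < j)%N then d i j else 0) + (if (j < i)%N then d j i else 0).
  case: (ltngtP i j) => h; first by rewrite addr0.
    by rewrite add0r dsym.
  have -> : i = j by apply: val_inj.
  by rewrite drefl addr0.
have W1 : W = \sum_(i < n) \sum_(j < n) (if (i < j)%N then d i j else 0).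
  by rewrite /wiener; apply: eq_bigr => i _; rewrite big_mkcond.
have W2 : W = \sum_(i < n) \sum_(j < n) (if (j < i)%N then d j i else 0).
  by rewrite W1 exchange_big.
rewrite (eq_bigr _ (fun i _ => DtE i)).
rewrite (eq_bigr _ (fun i _ => eq_bigr _ (fun j _ => sp i j))).
under eq_bigr do rewrite big_split.
rewrite big_split /= -W1 -W2; ring.
Qed.

Lemma Qs i j : Q i j = Q j i.
Proof. by have /matrixP/(_ j i) := Qsym; rewrite mxE. Qed.

Lemma Qrow i : \sum_j Q i j = 2 * Dt i.
Proof.
rewrite (eq_bigr _ (fun j _ => QE i j)) big_split /= -DtE (bigD1 i) //= eqxx mul1r.
rewrite big1 ?addr0; first by ring.
by move=> j ji; rewrite eq_sym (negbTE ji) mul0r.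
Qed.

Lemma key (w2 : (2 <= clique_number e)%N) (wn : (clique_number e <= n - 1)%N) : forall A : {set 'I_n}, max_order_clique e A ->
  let w : R := (clique_number e)%:R in let s := s_of e R A in
  let S11 := s + w * (w - 1) in let S12 := s - w * (w - 1) in
  let S22 := 4 * W - 3 * s + w * (w - 1) in
  [/\ 0 < w, 0 < n%:R - w,
   (forall al be : R, let u i := if i \in A then al else be in
      \sum_i \sum_j u i * Q i j * u j = al^+2 * S11 + 2 * al * be * S12 + be^+2 * S22),
   (forall al be : R, let u i := if i \in A then al else be in
      \sum_i u i ^+ 2 = al^+2 * w + be^+2 * (n%:R - w))
   & a_of e R A = -((n%:R - w) * S11 + w * S22) /\
   b_of e R A = S11 * S22 - S12^+2].
Proof.
  move=> A /andP [cl /eqP cA] w s S11 S12 S22.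
  have w0 : 0 < w by rewrite /w ltr0n; lia.
  have c20 : 0 < n%:R - w by rewrite subr_gt0 /w ltr_nat; lia.
  have adj x y : x \in A -> y \in A -> x != y -> d x y = 1.
    move=> xA yA xy; rewrite (@gdist_adj n e x y xy) //.
    by move/forall_inP: cl => /(_ x xA)/forall_inP/(_ y yA)/implyP; apply.
  have sumA1 : \sum_(j in A) (1:R) = w by rewrite sumr_const cA.
  have rowA i : i \in A -> \sum_(j in A) d i j = w - 1.
    move=> iA; rewrite (bigD1 i) //= drefl add0r -sumA1 [in RHS](bigD1 i) //= addrC addrK.
    by apply: eq_bigr => j /andP [jA ji]; apply: adj => //; rewrite eq_sym.
  have QA i : i \in A -> \sum_(j in A) Q i j = Dt i + (w - 1).
    move=> iA; rewrite (eq_bigr _ (fun j _ => QE i j)) big_split /= rowA // (bigD1 i) //= eqxx mul1r.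
    rewrite big1 ?addr0 // => j /andP [_ ji]; by rewrite eq_sym (negbTE ji) mul0r.
  have F11 : \sum_(i in A) \sum_(j in A) Q i j = S11.
    rewrite (eq_bigr _ QA) big_split /=.
    have -> : \sum_(i in A) (w - 1) = w * (w - 1) by rewrite sumr_const -mulr_natl cA.
    by [].
  have rowsplit i : \sum_(j in A) Q i j + \sum_(j | j \notin A) Q i j = 2 * Dt i.
    by rewrite -Qrow [RHS](bigID (mem A)).
  have F12 : \sum_(i in A) \sum_(j | j \notin A) Q i j = S12.
    have : \sum_(i in A) (\sum_(j in A) Q i j + \sum_(j | j \notin A) Q i j) = 2 * s.
      by rewrite (eq_bigr _ (fun i _ => rowsplit i)) -mulr_sumr.
    rewrite big_split /= F11 => h.
    have -> : \sum_(i in A) \sum_(j | j \notin A) Q i j = 2 * s - S11 by rewrite -h addrAC subrr add0r.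
    by rewrite /S11 /S12; ring.
  have F21 : \sum_(i | i \notin A) \sum_(j in A) Q i j = S12.
    rewrite -F12 exchange_big; apply: eq_bigr => i _; apply: eq_bigr => j _; exact: Qs.
  have Tot : \sum_i \sum_j Q i j = 4 * W.
    rewrite (eq_bigr _ (fun i _ => Qrow i)) -mulr_sumr WE mulrA.
    by congr (_ * _); ring.
  have F22 : \sum_(i | i \notin A) \sum_(j | j \notin A) Q i j = S22.
    have spl i : \sum_j Q i j = \sum_(j in A) Q i j + \sum_(j | j \notin A) Q i j.
      by rewrite (bigID (mem A)).
    move: Tot; rewrite (bigID (mem A)) /= (eq_bigr _ (fun i _ => spl i)) (eq_bigr _ (fun i _ => spl i)).
    rewrite !big_split /= F11 F12 F21 => h.
    have -> : \sum_(i | i \notin A) \sum_(j | j \notin A) Q i j = 4 * W - (S11 + S12 + S12).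
      by rewrite -h; ring.
    by rewrite /S11 /S12 /S22; ring.
  have sumn1 : \sum_(i < n) (1:R) = n%:R by rewrite sumr_const card_ord.
  split => //.
  - move=> al be u.
    have := @split_quad R n A (signless_dist_lap e R) al be; rewrite /= => ->.
    by rewrite F11 F12 F21 F22; ring.
  - move=> al be u.
    rewrite (bigID (mem A)) /=.
    rewrite (eq_bigr (fun=> al^+2 * 1)); last by move=> i iA; rewrite /u iA mulr1.
    rewrite [X in _ + X](eq_bigr (fun=> be^+2 * 1)); last by move=> i iA; rewrite /u (negbTE iA) mulr1.
    rewrite -!mulr_sumr !sumr_const cA.
    have := sumn1; rewrite (bigID (mem A)) /= !sumr_const cA => h.
    rewrite -/w in h *; move: h; set k := (#|_|%:R) => h.
    have -> : k = n%:R - w by rewrite -h addrAC subrr add0r.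
    by [].

  split.
    by rewrite /a_of /S11 /S22 /s /w; ring.
  by rewrite /b_of /S11 /S12 /S22 /s /w; ring.
Qed.

End Main2.

Theorem corollary4p7 (R : rcfType) (n : nat) (e : rel 'I_n) :
  simple_graph e -> connected_graph e ->
  (2 <= clique_number e)%N -> (clique_number e <= n - 1)%N ->
  (forall A : {set 'I_n}, max_order_clique e A ->
     let w : R := (clique_number e)%:R in
     let a := a_of e R A in let b := b_of e R A in
     (- a + Num.sqrt (a ^+ 2 - 4 * b * (n%:R - w) * w)) / (2 * (n%:R - w) * w)
       <= qD_max e R)
  /\
  (forall A : {set 'I_n}, max_order_clique e A ->
     let w : R := (clique_number e)%:R in
     let a := a_of e R A in let b := b_of e R A in
     qD_min e R <=
       (- a - Num.sqrt (a ^+ 2 - 4 * b * (n%:R - w) * w)) / (2 * (n%:R - w) * w)).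
Proof.
move=> [esym eirr] _ w2 wn.
pose Q := signless_dist_lap e R.
have Qsym : Q^T = Q := Qsym e esym.
have root_max r : root (char_poly Q) r -> r <= qD_max e R.
  move=> rr; apply: le_bigmax_seq; apply: in_rootsR => //.
  exact: monic_neq0 (char_poly_monic _).
have root_min r : root (char_poly Q) r -> qD_min e R <= r.
  move=> rr; apply: ge_bigmin_seq; apply: in_rootsR => //.
  exact: monic_neq0 (char_poly_monic _).
split.
  move=> A mA /=.
  have [w0 c20 Hq Hx [aE bE]] := @key R n e esym w2 wn A mA.
  rewrite aE bE; apply: quad_max => // al be.
  rewrite -Hq -Hx; exact: ray_max.
move=> A mA /=.
have [w0 c20 Hq Hx [aE bE]] := @key R n e esym w2 wn A mA.
rewrite aE bE; apply: quad_min => // al be.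
rewrite -Hq -Hx; exact: ray_min.
Qed.
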